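(* Let $n\ge2$ and $(s_1,\dots,s_{n-1},p)\in\mathbb C^n$ with $|p|\ne1$, and let $Q=\left(\frac{s_1-\bar s_{n-1}p}{1-|p|^2},\frac{s_2-\bar s_{n-2}p}{1-|p|^2},\dots,\frac{s_{n-1}-\bar s_1p}{1-|p|^2}\right)\in\mathbb C^{n-1}$. Then $(s_1,\dots,s_{n-1},p)\in\mathbb G_n$ if and only if $(s_1,\dots,s_{n-1},p)\in\widetilde{\mathbb G}_n$ and $Q\in\mathbb G_{n-1}$.
   Context: $\mathbb D$ is the open unit disc. For $m\ge1$, $\pi_m:\mathbb C^m\to\mathbb C^m$ maps $z$ to $(s_1(z),\dots,s_{m-1}(z),z_1\cdots z_m)$, $s_i$ the elementary symmetric polynomials; $\mathbb G_m=\pi_m(\mathbb D^m)$ (so $\mathbb G_1=\mathbb D$). $\widetilde{\mathbb G}_n=\{(y_1,\dots,y_{n-1},q)\in\mathbb C^n: q\in\mathbb D,\ y_j=\beta_j+\bar\beta_{n-j}q$ for some $\beta_j\in\mathbb C$ with $|\beta_j|+|\beta_{n-j}|<\binom{n}{j}$, $j=1,\dots,n-1\}$. *)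

(* Defs.v *)
From HB Require Import structures.
From mathcomp Require Import all_boot all_order all_algebra.
From mathcomp Require Import reals complex.
Set Implicit Arguments. Unset Strict Implicit. Unset Printing Implicit Defensive.
Import Order.TTheory GRing.Theory Num.Theory.
Local Open Scope ring_scope.
Local Open Scope complex_scope.

(* A point of C^m is encoded as x : nat -> R[i], its coordinates being
   x 1, ..., x m (1-indexed as in the paper; other values are irrelevant).
   Likewise z : nat -> R[i] encodes (z_1,...,z_m) as z 0, ..., z (m-1). *)

Definition inD (R : realType) (w : R[i]) : Prop := `|w| < 1.

Definition esym (R : realType) (m : nat) (z : nat -> R[i]) (k : nat) : R[i] :=
  \sum_(A : {set 'I_m} | #|A| == k) \prod_(j in A) z (val j).

Definition is_pi (R : realType) (m : nat) (z x : nat -> R[i]) : Prop :=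
  (forall k, (1 <= k)%N -> (k <= m.-1)%N -> x k = esym m z k) /\
  x m = \prod_(j < m) z (val j).

Definition inG (R : realType) (m : nat) (x : nat -> R[i]) : Prop :=
  exists z : nat -> R[i], (forall j, (j < m)%N -> inD (z j)) /\ is_pi m z x.

Definition inGt (R : realType) (n : nat) (x : nat -> R[i]) : Prop :=
  inD (x n) /\
  exists beta : nat -> R[i],
    forall j, (1 <= j)%N -> (j <= n.-1)%N ->
      x j = beta j + (beta (n - j)%N)^* * x n /\
      `|beta j| + `|beta (n - j)%N| < ('C(n, j))%:R.

(* Main.v *)
Require Import Defs.
From HB Require Import structures.
From mathcomp Require Import all_boot all_order all_algebra.
From mathcomp Require Import reals complex ring lra zify.
Set Implicit Arguments. Unset Strict Implicit. Unset Printing Implicit Defensive.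
Import Order.TTheory GRing.Theory Num.Theory.
Local Open Scope ring_scope.

Section Gen.
Variable T : comNzRingType.
Definition gesym m (z : nat -> T) k :=
  \sum_(A : {set 'I_m} | #|A| == k) \prod_(j in A) z (val j).

Lemma group_card m (g : nat -> T) (z : nat -> T) :
  \sum_(A : {set 'I_m}) g #|A| * \prod_(j in A) z (val j) =
  \sum_(k < m.+1) g k * gesym m z k.
Proof.
rewrite (partition_big (fun A : {set 'I_m} => (inord #|A| : 'I_m.+1)) xpredT) //=.
apply: eq_bigr => k _; rewrite /gesym big_distrr /=.
have cm (A : {set 'I_m}) : (#|A| < m.+1)%N.
  by rewrite ltnS (leq_trans (max_card _)) ?card_ord.
have E : forall A : {set 'I_m}, (inord #|A| == k) = (#|A| == k).
  move=> A; apply/eqP/eqP => [<-|h]; first by rewrite inordK.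
  by apply: val_inj; rewrite /= -h inordK.
under eq_bigl => A do rewrite E.
by apply: eq_bigr => A /eqP ->.
Qed.

Lemma sign_sub n k : (k <= n)%N -> (-1) ^+ (n - k) = (-1) ^+ n * (-1) ^+ k :> T.
Proof.
move=> kn; rewrite -{2}(subnK kn) exprD -mulrA -exprMn mulrNN mulr1 expr1n mulr1 //.
Qed.

Lemma vieta m (u : T) (v : nat -> T) :
  \prod_(j < m) (u - v j) = \sum_(k < m.+1) ((-1) ^+ k * u ^+ (m - k)) * gesym m v k.
Proof.
under eq_bigr => j _ do rewrite addrC.
rewrite bigA_distr -(group_card m (fun k => (-1) ^+ k * u ^+ (m - k))).
apply: eq_bigr => J _.
rewrite (bigID (mem J)) /=.
rewrite (eq_bigr (fun i => - v (val i))); last by move=> i ->.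
rewrite [X in _ * X](eq_bigr (fun i => u)); last by move=> i /negbTE ->.
rewrite prodrN.
have -> : \prod_(i | i \notin J) u = \prod_(i in ~: J) u.
  by apply: eq_bigl => i; rewrite in_setC.
rewrite prodr_const.
have -> : #|~: J| = (m - #|J|)%N.
  have h := cardsC J; rewrite card_ord in h.
  by apply/eqP; rewrite -(eqn_add2l #|J|) subnKC ?h // (leq_trans (max_card J)) ?card_ord.
by rewrite mulrAC.
Qed.

Lemma vieta_rev m (w : T) (v : nat -> T) :
  \prod_(j < m) (1 - v j * w) = \sum_(k < m.+1) ((-1) ^+ k * w ^+ k) * gesym m v k.
Proof.
under eq_bigr => j _ do rewrite addrC.
rewrite bigA_distr -(group_card m (fun k => (-1) ^+ k * w ^+ k)).
apply: eq_bigr => J _.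
rewrite (bigID (mem J)) /=.
rewrite (eq_bigr (fun i => - (v (val i) * w))); last by move=> i ->.
rewrite [X in _ * X](eq_bigr (fun i => 1)); last by move=> i /negbTE ->.
rewrite big1_eq mulr1 prodrN big_split /= prodr_const.
by rewrite mulrAC mulrA.
Qed.

Lemma gesym0 m (v : nat -> T) : gesym m v 0 = 1.
Proof.
rewrite /gesym (big_pred1 set0) ?big_set0 // => A /=.
by rewrite cards_eq0.
Qed.

Lemma gesymT m (v : nat -> T) : gesym m v m = \prod_(j < m) v j.
Proof.
rewrite /gesym (big_pred1 setT) => [|A /=].
  by apply: eq_bigl => i; rewrite in_setT.
apply/eqP/eqP => [h|->]; last by rewrite cardsT card_ord.
apply/setP/subset_cardP; last exact: subsetT.
by rewrite cardsT card_ord h.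
Qed.
End Gen.

Section Cx.
Variable R : realType.
Local Notation C := R[i].

Lemma esymE m (z : nat -> C) k : Defs.esym m z k = gesym m z k.
Proof. by []. Qed.

Lemma gesym_conj m (z : nat -> C) k :
  (gesym m z k)^* = gesym m (fun j => (z j)^*) k.
Proof.
rewrite /gesym rmorph_sum; apply: eq_bigr => A _; by rewrite rmorph_prod.
Qed.

Lemma norm_ineq (z w : C) : `|z| < 1 -> 1 <= `|w| -> `|1 - z^* * w| <= `|w - z|.
Proof.
move=> hz hw.
rewrite -(@ler_pXn2r _ 2) ?nnegrE //.
rewrite !normCK -subr_ge0.
have -> : (w - z) * (w - z)^* - (1 - z^* * w) * (1 - z^* * w)^* =
          (`|w| ^+ 2 - 1) * (1 - `|z| ^+ 2).
  by rewrite !normCK !rmorphB !rmorphM rmorph1 /= conjCK; ring.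
apply: mulr_ge0; rewrite subr_ge0.
  exact: exprn_ege1.
by apply: exprn_ile1 => //; apply: ltW.
Qed.

Lemma prod_ineq m (v : nat -> C) (w : C) : (forall j, (j < m)%N -> `|v j| < 1) ->
  1 <= `|w| ->
  `|\prod_(j < m) (1 - (v j)^* * w)| <= `|\prod_(j < m) (w - v j)|.
Proof.
move=> hv hw; rewrite !normr_prod; apply: ler_prod => j _.
by rewrite normr_ge0 /= norm_ineq // hv.
Qed.

Lemma prod_neq0 m (v : nat -> C) (w : C) : (forall j, (j < m)%N -> `|v j| < 1) ->
  1 <= `|w| -> \prod_(j < m) (w - v j) != 0.
Proof.
move=> hv hw; apply/prodf_neq0 => j _; rewrite subr_eq0; apply/eqP => e.
have := hv j (ltn_ord j); rewrite -e => h.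
by have := lt_le_trans h hw; rewrite ltxx.
Qed.

Lemma prod_lt1 m (v : nat -> C) (A : {set 'I_m}) :
  (forall j, (j < m)%N -> `|v j| < 1) -> A != set0 ->
  `|\prod_(j in A) v j| < 1.
Proof.
move=> hv /set0Pn [a aA]; rewrite normr_prod (bigD1 a) //=.
apply: (@le_lt_trans _ _ (`|v a| * 1)).
  apply: ler_wpM2l => //; apply: prodr_ile1 => j _.
  by rewrite normr_ge0 /= ltW // hv.
by rewrite mulr1 hv.
Qed.

Lemma esym_le m (v : nat -> C) k : (forall j, (j < m)%N -> `|v j| < 1) ->
  `|gesym m v k| <= ('C(m, k))%:R.
Proof.
move=> hv; rewrite /gesym; apply: (le_trans (ler_norm_sum _ _ _)).
apply: (@le_trans _ _ (\sum_(A : {set 'I_m} | #|A| == k) (1 : C))).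
  apply: ler_sum => A _; rewrite normr_prod; apply: prodr_ile1 => j _.
  by rewrite normr_ge0 /= ltW // hv.
rewrite sumr_const.
have -> : #|[pred A : {set 'I_m} | #|A| == k]| = 'C(m, k).
  by rewrite -[m in RHS](card_ord m) -card_draws; apply: eq_card => A; rewrite !inE.
by [].
Qed.

Lemma esym_lt m (v : nat -> C) k : (forall j, (j < m)%N -> `|v j| < 1) ->
  (1 <= k)%N -> (k <= m)%N ->
  `|gesym m v k| < ('C(m, k))%:R.
Proof.
move=> hv k1 km; rewrite /gesym; apply: (le_lt_trans (ler_norm_sum _ _ _)).
apply: (@lt_le_trans _ _ (\sum_(A : {set 'I_m} | #|A| == k) (1 : C))).
  apply: ltr_sum.
    have : (0 < #|[set A : {set 'I_m} | #|A| == k]|)%N.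
      by rewrite card_draws card_ord bin_gt0.
    case/card_gt0P => A; rewrite inE => hA.
    by apply/hasP; exists A; rewrite ?mem_index_enum.
  move=> A /eqP hA; apply: prod_lt1 => //.
  by rewrite -cards_eq0 hA -lt0n.
rewrite sumr_const.
have -> : #|[pred A : {set 'I_m} | #|A| == k]| = 'C(m, k).
  by rewrite -[m in RHS](card_ord m) -card_draws; apply: eq_card => A; rewrite !inE.
by [].
Qed.

Lemma coef_rev m (a : nat -> C) j :
  (\sum_(k < m.+1) a k *: 'X^(m - k))`_j =
  \sum_(k < m.+1) a k * (j == (m - k)%N)%:R.
Proof. by rewrite coef_sum; apply: eq_bigr => k _; rewrite coefZ coefXn. Qed.

Lemma coef_rev_at m (a : nat -> C) i : (i <= m)%N ->
  (\sum_(k < m.+1) a k *: 'X^(m - k))`_(m - i) = a i.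
Proof.
move=> im; rewrite coef_rev (bigD1 (@Ordinal m.+1 i im)) //=.
rewrite eqxx mulr1 big1 ?addr0 // => k hk.
case: eqP => [h|]; last by rewrite mulr0.
exfalso; move/negP: hk; apply; apply/eqP/val_inj => /=.
have := ltn_ord k; lia.
Qed.

Lemma coef_rev_big m (a : nat -> C) j : (m < j)%N ->
  (\sum_(k < m.+1) a k *: 'X^(m - k))`_j = 0.
Proof.
move=> mj; rewrite coef_rev big1 // => k _.
case: eqP => [h|]; last by rewrite mulr0.
lia.
Qed.

Lemma fta m (c : nat -> C) : c 0%N = 1 ->
  exists v : nat -> C, forall k, (k <= m)%N -> c k = gesym m v k.
Proof.
move=> c0.
pose a k := (-1) ^+ k * c k.
pose P : {poly C} := \sum_(k < m.+1) a k *: 'X^(m - k).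
have Pm : P`_m = 1 by rewrite -[m in P`_m]subn0 coef_rev_at // /a c0 mulr1.
have sP : size P = m.+1.
  apply/eqP; rewrite eqn_leq; apply/andP; split.
    by apply/leq_sizeP => j hj; apply: coef_rev_big.
  rewrite ltnNge; apply/negP => /leq_sizeP h.
  by move: (h m (leqnn m)); rewrite Pm => /eqP; rewrite oner_eq0.
have lP : lead_coef P = 1 by rewrite lead_coefE sP.
have [r Pr] := closed_field_poly_normal P.
rewrite lP scale1r in Pr.
have sr : size r = m.
  by have := size_prod_XsubC r id; rewrite -Pr sP => -[].
exists (fun j => nth 0 r j) => k km.
have Pv : P = \sum_(k < m.+1) ((-1) ^+ k * gesym m (fun j => nth 0 r j) k) *: 'X^(m - k).
  rewrite Pr (big_nth 0) sr big_mkord (vieta m _ (fun j => (r`_j)%:P)).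
  apply: eq_bigr => i _.
  have -> : gesym m (fun j => (nth 0 r j)%:P) i = (gesym m (fun j => nth 0 r j) i)%:P.
    by rewrite /gesym rmorph_sum; apply: eq_bigr => A _; rewrite rmorph_prod.
  by rewrite -mul_polyC rmorphM rmorphXn rmorphN1 mulrAC.
have := coef_rev_at (fun k => (-1) ^+ k * gesym m (fun j => nth 0 r j) k) km.
rewrite -Pv coef_rev_at // /a => /(congr1 (fun t => (-1) ^+ k * t)).
by rewrite !mulrA -exprMn mulrNN mulr1 expr1n !mul1r.
Qed.


Lemma rev_sum n (F : nat -> C) :
  \sum_(k < n.+1) F k = \sum_(k < n.+1) F (n - k)%N.
Proof.
rewrite (reindex_inj rev_ord_inj) /=; apply: eq_bigr => k _.
by rewrite subSS.
Qed.

Lemma R1 N (w : C) (f : nat -> C) : f N.+1 = 0 ->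
  \sum_(k < N.+2) ((-1) ^+ k * w ^+ (N.+1 - k)) * f k =
  w * \sum_(k < N.+1) ((-1) ^+ k * w ^+ (N - k)) * f k.
Proof.
move=> hf; rewrite big_ord_recr /= hf mulr0 addr0 big_distrr.
apply: eq_bigr => k _; rewrite subSn ?exprS; last by have := ltn_ord k.
rewrite /=; ring.
Qed.

Lemma R3 N (w : C) (f : nat -> C) : f N.+1 = 0 ->
  \sum_(k < N.+2) ((-1) ^+ k * w ^+ k) * f k =
  \sum_(k < N.+1) ((-1) ^+ k * w ^+ k) * f k.
Proof. by move=> hf; rewrite big_ord_recr /= hf mulr0 addr0. Qed.

Lemma R4 n (w : C) (f : nat -> C) :
  \sum_(k < n.+1) ((-1) ^+ k * w ^+ k) * f (n - k)%N =
  (-1) ^+ n * \sum_(i < n.+1) ((-1) ^+ i * w ^+ (n - i)) * f i.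
Proof.
rewrite (rev_sum n (fun k => ((-1) ^+ k * w ^+ k) * f (n - k)%N)) big_distrr; apply: eq_bigr => k _.
have kn : (k <= n)%N by have := ltn_ord k.
rewrite subKn // sign_sub //.
have e : (-1) ^+ n * (-1) ^+ n = 1 :> C by rewrite -exprMn mulrNN mulr1 expr1n.
by rewrite /=; ring.
Qed.

Lemma R2 N (w : C) (f : nat -> C) : f N.+1 = 0 ->
  \sum_(k < N.+2) ((-1) ^+ k * w ^+ (N.+1 - k)) * f (N.+1 - k)%N =
  (-1) ^+ N.+1 * \sum_(i < N.+1) ((-1) ^+ i * w ^+ i) * f i.
Proof.
move=> hf.
rewrite (rev_sum N.+1 (fun k => ((-1) ^+ k * w ^+ (N.+1 - k)) * f (N.+1 - k)%N)).
rewrite big_ord_recr /= subKn // hf mulr0 addr0 big_distrr; apply: eq_bigr => k _.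
have kn : (k <= N.+1)%N by have := ltn_ord k; lia.
rewrite subKn // sign_sub //.
have e : (-1) ^+ N.+1 * (-1) ^+ N.+1 = 1 :> C by rewrite -exprMn mulrNN mulr1 expr1n.
by rewrite /=; ring.
Qed.

End Cx.

Section Main.
Variable R : realType.
Local Notation C := R[i].

Definition Xd m (s : nat -> C) (p : C) k := if k == m.+2 then p else s k.
Definition Qd m (s : nat -> C) (p : C) k :=
  (s k - (s (m.+2 - k)%N)^* * p) / (1 - `|p| ^+ 2).
Definition Sd m (s : nat -> C) (p : C) k :=
  if k == 0%N then 1 else if k == m.+2 then p else s k.
Definition Qcd m (s : nat -> C) (p : C) k :=
  if k == 0%N then 1 else if k == m.+2 then 0 else Qd m s p k.

Lemma d_neq0 (p : C) : `|p| != 1 -> 1 - p * p^* != 0.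
Proof.
move=> hp; rewrite -normCK subr_eq0 eq_sym sqrf_eq1; apply/negP => /orP [|/eqP h].
  by apply/negP.
by have := normr_ge0 p; rewrite h ler0N1.
Qed.

Lemma key m s p k : `|p| != 1 -> (k <= m.+2)%N ->
  Sd m s p k = Qcd m s p k + (Qcd m s p (m.+2 - k)%N)^* * p.
Proof.
move=> hp kn; have d0 := d_neq0 hp.
rewrite /Sd /Qcd; case: eqP => [->|k0].
  by rewrite subn0 /= eqxx rmorph0 mul0r addr0.
case: eqP => [->|kn'].
  by rewrite subnn eqxx rmorph1 mul1r add0r.
have h1 : (m.+2 - k == 0)%N = false by apply/eqP; lia.
have h2 : (m.+2 - k == m.+2)%N = false by apply/eqP; lia.
rewrite h1 h2 /Qd subKn // !normCK.
rewrite !(rmorphM, rmorphB, fmorphV, rmorph1) /= !conjCK.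
field.
by rewrite mulrC; exact: d0.
Qed.

Definition Pf m s p (w : C) :=
  \sum_(k < m.+3) ((-1) ^+ k * w ^+ (m.+2 - k)) * Sd m s p k.
Definition Psf m s p (w : C) :=
  \sum_(k < m.+3) ((-1) ^+ k * w ^+ k) * (Sd m s p k)^*.
Definition Tf m s p (w : C) :=
  \sum_(k < m.+2) ((-1) ^+ k * w ^+ (m.+1 - k)) * Qcd m s p k.
Definition Tsf m s p (w : C) :=
  \sum_(k < m.+2) ((-1) ^+ k * w ^+ k) * (Qcd m s p k)^*.

Lemma Qcd_top m s p : Qcd m s p m.+2 = 0.
Proof. by rewrite /Qcd eqxx. Qed.

Lemma I1 m s p w : `|p| != 1 ->
  Pf m s p w = w * Tf m s p w + (-1) ^+ m.+2 * p * Tsf m s p w.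
Proof.
move=> hp; rewrite /Pf.
under eq_bigr => k _ do rewrite (@key m s p k hp (ltn_ord k)) mulrDr.
rewrite big_split /= (R1 w (Qcd_top m s p)).
congr (_ + _).
have -> : \sum_(i < m.+3) ((-1) ^+ i * w ^+ (m.+2 - i)) * ((Qcd m s p (m.+2 - i)%N)^* * p)
   = (\sum_(i < m.+3) ((-1) ^+ i * w ^+ (m.+2 - i)) * (Qcd m s p (m.+2 - i)%N)^*) * p.
  by rewrite big_distrl; apply: eq_bigr => i _; rewrite mulrA.
rewrite (@R2 R m.+1 w (fun i => (Qcd m s p i)^*)); last by rewrite Qcd_top rmorph0.
by rewrite /Tsf mulrAC.
Qed.

Lemma I2 m s p w : `|p| != 1 ->
  Psf m s p w = Tsf m s p w + (-1) ^+ m.+2 * p^* * w * Tf m s p w.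
Proof.
move=> hp; rewrite /Psf.
under eq_bigr => k _ do rewrite (@key m s p k hp (ltn_ord k)) !(rmorphD, rmorphM) /= conjCK mulrDr.
rewrite big_split /= (@R3 R m.+1 w (fun i => (Qcd m s p i)^*)); last by rewrite Qcd_top rmorph0.
congr (_ + _).
have -> : \sum_(i < m.+3) ((-1) ^+ i * w ^+ i) * (Qcd m s p (m.+2 - i)%N * p^*)
   = (\sum_(i < m.+3) ((-1) ^+ i * w ^+ i) * Qcd m s p (m.+2 - i)%N) * p^*.
  by rewrite big_distrl; apply: eq_bigr => i _; rewrite mulrA.
rewrite (R4 m.+2 w (Qcd m s p)) (R1 w (Qcd_top m s p)).
by rewrite /Tf; ring.
Qed.

End Main.

Section Main2.
Variable R : realType.
Local Notation C := R[i].

Lemma sgn2 n : (-1) ^+ n * (-1) ^+ n = 1 :> C.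
Proof. by rewrite -exprMn mulrNN mulr1 expr1n. Qed.

Lemma Trel m s (p : C) w : `|p| != 1 ->
  (1 - p * p^*) * w * Tf m s p w = Pf m s p w - (-1) ^+ m.+2 * p * Psf m s p w.
Proof.
move=> hp.
transitivity ((1 - p * p^*) * w * Tf m s p w +
   (1 - (-1) ^+ m.+2 * (-1) ^+ m.+2) * (p * p^* * w * Tf m s p w)).
  by rewrite sgn2 subrr mul0r addr0.
rewrite (I1 m s w hp) (I2 m s w hp).
move: ((-1) ^+ m.+2) (Tf m s p w) (Tsf m s p w) => e T Ts.
ring.
Qed.

Lemma fwd m s (p : C) : `|p| != 1 -> inG m.+2 (Xd m s p) ->
  inGt m.+2 (Xd m s p) /\ inG m.+1 (Qd m s p).
Proof.
move=> hp [z [zD [hs hx]]].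
have zD' : forall j, (j < m.+2)%N -> `|z j| < 1 := zD.
have pz : p = \prod_(j < m.+2) z j by move: hx; rewrite /Xd eqxx.
have Sz : forall k, (k <= m.+2)%N -> Sd m s p k = gesym m.+2 z k.
  move=> k kn; rewrite /Sd; case: eqP => [->|k0]; first by rewrite gesym0.
  case: eqP => [->|kn']; first by rewrite gesymT.
  have := hs k _ _; rewrite /Xd; case: eqP => // _ -> //; lia.
have Pz w : Pf m s p w = \prod_(j < m.+2) (w - z j).
  by rewrite vieta /Pf; apply: eq_bigr => k _; have := ltn_ord k; rewrite ltnS => hk; rewrite Sz.
have Psz w : Psf m s p w = \prod_(j < m.+2) (1 - (z j)^* * w).
  rewrite (vieta_rev m.+2 w (fun j => (z j)^*)) /Psf; apply: eq_bigr => k _.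
  by have := ltn_ord k; rewrite ltnS => hk; rewrite Sz // gesym_conj.
have p1 : `|p| < 1.
  rewrite pz (_ : \prod_(j < m.+2) z j = \prod_(j in [set: 'I_m.+2]) z j); last first.
    by apply: eq_bigl => j; rewrite in_setT.
  apply: prod_lt1 => //.
  by apply/set0Pn; exists ord0; rewrite in_setT.
have c0 : Qcd m s p 0 = 1 by [].
have [wv hQ] := fta m.+1 c0.
have Tw w : Tf m s p w = \prod_(j < m.+1) (w - wv j).
  by rewrite vieta /Tf; apply: eq_bigr => k _; have := ltn_ord k; rewrite ltnS => hk; rewrite hQ.
have wvD : forall j, (j < m.+1)%N -> `|wv j| < 1.
  move=> j hj; rewrite real_ltNge ?normr_real ?real1 //; apply/negP => hw.
  have T0 : Tf m s p (wv j) = 0.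
    by rewrite Tw (bigD1 (Ordinal hj)) //= subrr mul0r.
  have := Trel m s (wv j) hp; rewrite T0 mulr0 => /eqP; rewrite eq_sym subr_eq0 => /eqP E.
  have Pn0 : Pf m s p (wv j) != 0 by rewrite Pz; apply: prod_neq0.
  have : `|Pf m s p (wv j)| <= `|p| * `|Pf m s p (wv j)|.
    rewrite {1}E normrM [`|_ * p|]normrM normr_sign mul1r; apply: ler_wpM2l => //.
    by rewrite Pz Psz; apply: prod_ineq.
  rewrite ler_pMl ?normr_gt0 // => h.
  by have := lt_le_trans p1 h; rewrite ltxx.
have hQd : forall k, (1 <= k)%N -> (k <= m.+1)%N -> Qd m s p k = gesym m.+1 wv k.
  move=> k k1 km; rewrite -hQ //; rewrite /Qcd.
  case: eqP => [?|_]; first lia.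
  by case: eqP => [?|_]; first lia.
split.
  split; first by rewrite /inD /Xd eqxx.
  exists (Qd m s p) => j j1 jn.
  have jn' : (j <= m.+2)%N by lia.
  have K := key s hp jn'.
  rewrite /Sd /Qcd in K.
  have e1 : (j == 0%N) = false by apply/eqP; lia.
  have e2 : (j == m.+2) = false by apply/eqP; lia.
  have e3 : ((m.+2 - j)%N == 0%N) = false by apply/eqP; lia.
  have e4 : ((m.+2 - j)%N == m.+2) = false by apply/eqP; lia.
  rewrite e1 e2 e3 e4 in K.
  split; first by rewrite /Xd e2 eqxx; exact: K.
  rewrite (hQd j) // ?(hQd (m.+2 - j)%N) //; try lia.
  case: j j1 jn {jn' K e1 e2 e3 e4} => [|i] // _ jn.
  rewrite binS natrD.
  have -> : (m.+2 - i.+1 = m.+1 - i)%N by lia.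
  have hb : 'C(m.+1, i) = 'C(m.+1, (m.+1 - i)%N) by rewrite bin_sub //; lia.
  rewrite [in X in _ < _ + X]hb.
  apply: ltr_leD; first by apply: esym_lt.
  exact: esym_le.
exists wv; split; first exact: wvD.
split.
  move=> k k1 km; rewrite hQd //; lia.
rewrite hQd // gesymT //.
Qed.

Lemma bwd m s (p : C) : `|p| != 1 -> inGt m.+2 (Xd m s p) -> inG m.+1 (Qd m s p) ->
  inG m.+2 (Xd m s p).
Proof.
move=> hp [p1 _] [wv [wD [hs hq]]].
have p1' : `|p| < 1 by move: p1; rewrite /inD /Xd eqxx.
have wD' : forall j, (j < m.+1)%N -> `|wv j| < 1 := wD.
have hQ : forall k, (k <= m.+1)%N -> Qcd m s p k = gesym m.+1 wv k.
  move=> k km; rewrite /Qcd; case: eqP => [->|k0]; first by rewrite gesym0.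
  case: eqP => [?|_]; first lia.
  case: (k =P m.+1) => [->|kn]; first by rewrite gesymT; exact: hq.
  by apply: hs; lia.
have Tw w : Tf m s p w = \prod_(j < m.+1) (w - wv j).
  by rewrite vieta /Tf; apply: eq_bigr => k _; have := ltn_ord k; rewrite ltnS => hk; rewrite hQ.
have Tsw w : Tsf m s p w = \prod_(j < m.+1) (1 - (wv j)^* * w).
  rewrite (vieta_rev m.+1 w (fun j => (wv j)^*)) /Tsf; apply: eq_bigr => k _.
  by have := ltn_ord k; rewrite ltnS => hk; rewrite hQ // gesym_conj.
have c0 : Sd m s p 0 = 1 by [].
have [zv hS] := fta m.+2 c0.
have Pz w : Pf m s p w = \prod_(j < m.+2) (w - zv j).
  by rewrite vieta /Pf; apply: eq_bigr => k _; have := ltn_ord k; rewrite ltnS => hk; rewrite hS.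
have zvD : forall j, (j < m.+2)%N -> `|zv j| < 1.
  move=> j hj; rewrite real_ltNge ?normr_real ?real1 //; apply/negP => hw.
  have P0 : Pf m s p (zv j) = 0.
    by rewrite Pz (bigD1 (Ordinal hj)) //= subrr mul0r.
  rewrite (I1 m s (zv j) hp) in P0.
  move/eqP: P0; rewrite addr_eq0 => /eqP E.
  have Tn0 : Tf m s p (zv j) != 0 by rewrite Tw; apply: prod_neq0.
  have h1 : `|Tsf m s p (zv j)| <= `|Tf m s p (zv j)|.
    by rewrite Tw Tsw; apply: prod_ineq.
  have : `|zv j| * `|Tf m s p (zv j)| <= `|p| * `|Tf m s p (zv j)|.
    rewrite -normrM E normrN normrM [`|_ * p|]normrM normr_sign mul1r; apply: ler_wpM2l => //.
  rewrite ler_pM2r ?normr_gt0 // => h.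
  by have := lt_le_trans p1' (le_trans hw h); rewrite ltxx.
exists zv; split; first exact: zvD.
split.
  move=> k k1 km; have := hS k _; rewrite /Sd /Xd.
  case: eqP => [?|_]; first lia.
  case: eqP => [?|_]; first lia.
  by move=> ->; [| lia].
have := hS m.+2 (leqnn _); rewrite /Sd /Xd eqxx gesymT /= => ->; by [].
Qed.

End Main2.

Local Open Scope complex_scope.

Theorem mainTheorem7 (R : realType) (n : nat) (s : nat -> R[i]) (p : R[i]) :
  (2 <= n)%N -> `|p| != 1 ->
  let x := fun k : nat => if k == n then p else s k in
  let Q := fun k : nat =>
    (s k - (s (n - k)%N)^* * p) / (1 - `|p| ^+ 2) in
  inG n x <-> (inGt n x /\ inG n.-1 Q).
Proof.
case: n => [|[|m]] // _ hp x Q.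
have E1 : x = Xd m s p by [].
have E2 : Q = Qd m s p by [].
rewrite E1 E2 /=.
split; first exact: fwd.
by case=> h1 h2; exact: bwd.
Qed.
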